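(* For a finite word $\pi$ of distinct positive integers, let $\Psi(\pi)$ be the increasing binary tree defined recursively by: $\Psi(\emptyset)=\emptyset$; otherwise write $\pi=\sigma\,i\,\tau$ with $i$ the least letter of $\pi$, and let $\Psi(\pi)$ have root $i$ with left subtree $\Psi(\sigma)$ and right subtree $\Psi(\tau)$. Then $\Psi$ restricts to a bijection from the set $\mathrm{And}^I_n$ of André I permutations of $[n]$ onto the set $\mathcal{T}^I_n$ of André I trees on $[n]$, and to a bijection from the set $\mathrm{And}^{II}_n$ of André II permutations of $[n]$ onto the set $\mathcal{T}^{II}_n$ of André II trees on $[n]$. Moreover, for every such $\pi$ with $T=\Psi(\pi)$, $l(T)=\operatorname{des}(\pi)$ and $\operatorname{inv}(T)=\operatorname{inv}(\pi)$.
   Context: $[n]=\{1,\dots,n\}$. André permutations: the empty word and every single-letter word are both André I and André II permutations. A word $\sigma$ of $m\ge2$ distinct integers, written $\sigma=\tau\,\min(\sigma)\,\tau'$, is an André I permutation if $\tau$ and $\tau'$ are André I permutations and the maximum letter of $\tau\tau'$ lies in $\tau'$; it is an André II permutation if $\tau,\tau'$ are André II permutations and the minimum letter of $\tau\tau'$ lies in $\tau'$. For a permutation $\pi=\pi_1\cdots\pi_n$ with convention $\pi_0=\pi_{n+1}=0$, $\operatorname{des}(\pi)=\#\{0\le i\le n:\pi_i>\pi_{i+1}\}$ and $\operatorname{inv}(\pi)=\#\{(i,j):i<j,\ \pi_i>\pi_j\}$. An increasing binary tree on $[n]$ is a rooted tree on vertex set $[n]$, labels increasing along paths from the root, each vertex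 having at most a left child and at most a right child (distinguished). An André I tree is an increasing binary tree in which, for every vertex, the maximum label of its left subtree is smaller than that of its right subtree, whenever at least one is nonempty, with the maximum of an empty tree taken to be $0$. An André II tree is an increasing binary tree in which, for every vertex with at least one child, the minimum label of its left subtree is larger than that of its right subtree, the minimum of an empty tree taken to be $+\infty$. $l(T)$ is the number of leaves of $T$. An inversion of an increasing binary tree $T$ is a pair of vertices $(i,j)$ with $i>j$ such that either (1) $j$ lies to the right of the path from the root to $i$, i.e. $j$ belongs to the right subtree of some vertex $v$ of this path whose left child lies on the path; or (2) $j$ lies on the path from the root to $i$ and the left child of $j$ lies on this path. $\operatorname{inv}(T)$ is the number of inversions. *)

(* Defs.v *)
From mathcomp Require Import all_boot.
Set Implicit Arguments. Unset Strict Implicit. Unset Printing Implicit Defensive.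

Definition seqmin (s : seq nat) : nat := foldr minn (head 0 s) s.
Definition seqmax (s : seq nat) : nat := foldr maxn 0 s.

Fixpoint andreI_aux (k : nat) (s : seq nat) : bool :=
  match k with
  | 0 => true
  | k'.+1 =>
      if size s <= 1 then true else
      let i := index (seqmin s) s in
      let t := take i s in let t' := drop i.+1 s in
      [&& andreI_aux k' t, andreI_aux k' t' & seqmax (t ++ t') \in t']
  end.
Definition andreI (s : seq nat) : bool := andreI_aux (size s) s.

Fixpoint andreII_aux (k : nat) (s : seq nat) : bool :=
  match k with
  | 0 => true
  | k'.+1 =>
      if size s <= 1 then true else
      let i := index (seqmin s) s in
      let t := take i s in let t' := drop i.+1 s in
      [&& andreII_aux k' t, andreII_aux k' t' & seqmin (t ++ t') \in t']
  end.
Definition andreII (s : seq nat) : bool := andreII_aux (size s) s.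

Definition is_perm_word (n : nat) (s : seq nat) : bool := perm_eq s (iota 1 n).
Definition AndI (n : nat) (s : seq nat) : bool := is_perm_word n s && andreI s.
Definition AndII (n : nat) (s : seq nat) : bool := is_perm_word n s && andreII s.

(* des with pi_0 = pi_{n+1} = 0 *)
Definition des (s : seq nat) : nat :=
  let p := 0 :: s ++ [:: 0] in
  \sum_(0 <= i < (size s).+1) (nth 0 p i.+1 < nth 0 p i).
Definition inv_word (s : seq nat) : nat :=
  \sum_(0 <= i < size s) \sum_(i.+1 <= j < size s) (nth 0 s j < nth 0 s i).

Inductive btree : Type := Leaf | Node of btree & nat & btree.

Fixpoint labels (t : btree) : seq nat :=
  match t with Leaf => [::] | Node l x r => labels l ++ x :: labels r end.

Definition root (t : btree) : option nat :=
  match t with Leaf => None | Node _ x _ => Some x end.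

Fixpoint increasing (t : btree) : bool :=
  match t with
  | Leaf => true
  | Node l x r => [&& all (fun y => x < y) (labels l ++ labels r),
                      increasing l & increasing r]
  end.

Definition inc_tree_on (n : nat) (t : btree) : bool :=
  perm_eq (labels t) (iota 1 n) && increasing t.

Definition is_leaf (t : btree) : bool := if t is Leaf then true else false.

(* max label, with max of the empty tree = 0 *)
Definition maxlab (t : btree) : nat := foldr maxn 0 (labels t).
(* min label, with None standing for +infinity (empty tree) *)
Definition minlab (t : btree) : option nat :=
  if labels t is x :: s then Some (foldr minn x s) else None.
Definition lt_oinf (a b : option nat) : bool :=
  match a, b with
  | Some x, Some y => x < y
  | Some _, None => true
  | None, _ => false
  end.

Fixpoint andreIT (t : btree) : bool :=
  match t with
  | Leaf => true
  | Node l x r =>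
      [&& (if is_leaf l && is_leaf r then true else maxlab l < maxlab r),
          andreIT l & andreIT r]
  end.
Fixpoint andreIIT (t : btree) : bool :=
  match t with
  | Leaf => true
  | Node l x r =>
      [&& (if is_leaf l && is_leaf r then true else lt_oinf (minlab r) (minlab l)),
          andreIIT l & andreIIT r]
  end.

Definition AndreITree (n : nat) (t : btree) : bool := inc_tree_on n t && andreIT t.
Definition AndreIITree (n : nat) (t : btree) : bool := inc_tree_on n t && andreIIT t.

(* number of leaves (vertices with no child) *)
Fixpoint leaves (t : btree) : nat :=
  match t with
  | Leaf => 0
  | Node Leaf _ Leaf => 1
  | Node l _ r => leaves l + leaves r
  end.

(* the path from the root to vertex i, as the list of subtrees rooted at
   the vertices of the path (root first, the node of i last) *)
Fixpoint path_to (t : btree) (i : nat) : seq btree :=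
  match t with
  | Leaf => [::]
  | Node l x r =>
      if x == i then [:: t]
      else if i \in labels l then t :: path_to l i
      else if i \in labels r then t :: path_to r i
      else [::]
  end.

(* (i,j) is an inversion of t: i > j and either (1) j is in the right subtree
   of a vertex v of the path whose left child is on the path, or (2) j is on
   the path and its left child is on the path. *)
Definition tree_inv_pair (t : btree) (i j : nat) : bool :=
  let P := path_to t i in
  (j < i) &&
  has (fun v => match v with
                | Leaf => false
                | Node l x r =>
                    (root l \in map root P) && ((j \in labels r) || (j == x))
                end) P.

Definition inv_tree (t : btree) : nat :=
  \sum_(i <- labels t) \sum_(j <- labels t) tree_inv_pair t i j.

Fixpoint psi_aux (k : nat) (s : seq nat) : btree :=
  match k with
  | 0 => Leaf
  | k'.+1 =>
      if s is [::] then Leaf else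
      let m := seqmin s in let i := index m s in
      Node (psi_aux k' (take i s)) m (psi_aux k' (drop i.+1 s))
  end.
Definition Psi (s : seq nat) : btree := psi_aux (size s) s.

(* Main.v *)
Require Import Defs.
From mathcomp Require Import all_boot zify.
Set Implicit Arguments. Unset Strict Implicit. Unset Printing Implicit Defensive.

Lemma foldr_minn_spec a s :
  foldr minn a s \in a :: s /\ foldr minn a s <= a /\
  (forall y, y \in s -> foldr minn a s <= y).
Proof.
elim: s => [|b s [IH1 [IH2 IH3]]] /=; first by rewrite inE eqxx.
split; last split.
- rewrite /minn; case: ifP => _; first by rewrite !inE eqxx orbT.
  move: IH1; rewrite !inE => /orP[->|->]; by rewrite ?orbT.
- by rewrite geq_min IH2 orbT.
- move=> y; rewrite inE => /orP[/eqP->|/IH3 h]; first by rewrite geq_min leqnn.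
  by rewrite geq_min h orbT.
Qed.

Lemma seqmin_spec s : s != [::] ->
  seqmin s \in s /\ (forall y, y \in s -> seqmin s <= y).
Proof.
case: s => [//|a s] _; rewrite /seqmin /=.
have [h1 [h2 h3]] := foldr_minn_spec a s.
split.
- by rewrite /minn; case: ifP => _; rewrite ?inE ?eqxx // h1.
- move=> y; rewrite inE => /orP[/eqP->|/h3 h]; first by rewrite geq_min leqnn.
  by rewrite geq_min h orbT.
Qed.

Lemma seqmin_eq s m : m \in s -> (forall y, y \in s -> m <= y) -> seqmin s = m.
Proof.
move=> hm hle; have hs : s != [::] by apply/eqP => E; rewrite E in hm.
have [h1 h2] := seqmin_spec hs.
by apply/eqP; rewrite eqn_leq h2 // hle.
Qed.

Lemma foldr_maxn_spec s : s != [::] ->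
  foldr maxn 0 s \in s /\ (forall y, y \in s -> y <= foldr maxn 0 s).
Proof.
elim: s => [//|a s IH] _ /=.
case: (altP (s =P [::])) => [->|hs] /=.
  by rewrite maxn0 inE eqxx; split=> // y; rewrite inE => /eqP->.
have [h1 h2] := IH hs.
split.
- rewrite /maxn; case: ifP => _; first by rewrite inE h1 orbT.
  by rewrite inE eqxx.
- move=> y; rewrite inE => /orP[/eqP->|/h2 h]; first by rewrite leq_max leqnn.
  by rewrite leq_max h orbT.
Qed.

Lemma foldr_maxn0 s : s = [::] -> foldr maxn 0 s = 0.
Proof. by move=> ->. Qed.

Lemma foldr_maxn_cat a b : foldr maxn 0 (a ++ b) = maxn (foldr maxn 0 a) (foldr maxn 0 b).
Proof. elim: a => [|x a IH] /=; first by rewrite max0n. by rewrite IH maxnA. Qed.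

Lemma labels_psi_aux k s : size s <= k -> labels (psi_aux k s) = s.
Proof.
elim: k s => [|k IH] [|a s] //= hs.
set m := seqmin (a :: s); set i := index m (a :: s).
have hm : m \in a :: s by have [] := @seqmin_spec (a :: s).
have hi : i < size (a :: s) by rewrite index_mem.
rewrite !IH.
- by rewrite -[in RHS](cat_take_drop i (a :: s)) (drop_nth m hi) nth_index.
- by rewrite size_drop; move: hs hi => /=; lia.
- rewrite size_take; move: hs hi => /=; case: ifP; lia.
Qed.

Lemma labels_Psi s : labels (Psi s) = s.
Proof. exact: labels_psi_aux. Qed.

Lemma split_min s : s != [::] ->
  let m := seqmin s in let i := index m s in
  s = take i s ++ m :: drop i.+1 s.
Proof.
move=> hs m i.
have [hm _] := seqmin_spec hs.
have hi : i < size s by rewrite index_mem.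
by rewrite -[LHS](cat_take_drop i s) (drop_nth m hi) nth_index.
Qed.

Lemma psi_aux_S k s : s != [::] ->
  psi_aux k.+1 s = Node (psi_aux k (take (index (seqmin s) s) s)) (seqmin s)
                        (psi_aux k (drop (index (seqmin s) s).+1 s)).
Proof. by case: s. Qed.

Lemma increasing_psi_aux k s : size s <= k -> uniq s -> increasing (psi_aux k s).
Proof.
elim: k s => [|k IH] s; first by case: s.
case: (altP (s =P [::])) => [->//|hne] hs hu.
rewrite psi_aux_S //.
have hsp := split_min hne.
move: hsp; set m := seqmin s; set i := index m s => hsp.
have [hm hle] := seqmin_spec hne; rewrite -/m in hm hle.
have hi : i < size s by rewrite index_mem.
have hsd : size (drop i.+1 s) <= k by rewrite size_drop; move: hs hi => /=; lia.
have hst : size (take i s) <= k by rewrite size_take; move: hs hi => /=; case: ifP; lia.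
rewrite /= !labels_psi_aux // !IH ?take_uniq ?drop_uniq // ?andbT.
have hu' : uniq (take i s ++ m :: drop i.+1 s) by rewrite -hsp.
move: hu'; rewrite cat_uniq /= => /and4P[_ hnt hmd _].
apply/allP => y hy.
have hys : y \in s by rewrite hsp mem_cat inE; move: hy; rewrite mem_cat => /orP[]->; rewrite ?orbT.
rewrite ltn_neqAle hle // andbT.
apply/eqP => E; subst y.
move: hy; rewrite mem_cat (negbTE hmd) orbF; move: hnt; rewrite negb_or => /andP[h1 h2] h3.
by rewrite h3 in h1.
Qed.

Lemma increasing_Psi s : uniq s -> increasing (Psi s).
Proof. exact: increasing_psi_aux. Qed.

Lemma labels_nil t : (labels t == [::]) = is_leaf t.
Proof. by case: t => //= l x r; case: (labels l). Qed.

Lemma psi_labels_aux k t : size (labels t) <= k -> increasing t -> psi_aux k (labels t) = t.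
Proof.
elim: k t => [|k IH] [|l x r] //=.
  by rewrite size_cat /= addnS.
move=> hs /and3P[hall hl hr].
case E: (labels l ++ x :: labels r) => [|a s]; first by case: (labels l) E.
rewrite -E.
have hm : seqmin (labels l ++ x :: labels r) = x.
  apply: seqmin_eq; first by rewrite mem_cat inE eqxx orbT.
  move=> y; rewrite mem_cat inE => /orP[hy|/orP[/eqP->//|hy]];
    apply: ltnW; apply: (allP hall); rewrite mem_cat hy ?orbT //.
have hxl : x \notin labels l.
  apply/negP => hx; have := allP hall x; rewrite mem_cat hx => /(_ isT).
  by rewrite ltnn.
rewrite hm index_cat (negbTE hxl) /= eqxx addn0 take_size_cat //.
have -> : drop (size (labels l)).+1 (labels l ++ x :: labels r) = labels r.
  by elim: (labels l) => [|? ? /= ->]; rewrite /= ?drop0.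
rewrite !IH //; move: hs; rewrite size_cat /=; lia.
Qed.

Lemma Psi_labels t : increasing t -> Psi (labels t) = t.
Proof. exact: psi_labels_aux. Qed.

Lemma disj (a b : seq nat) y : uniq (a ++ b) -> y \in a -> y \in b -> False.
Proof.
rewrite cat_uniq => /and3P[_ /hasPn h _] ya yb.
by have := h y yb; rewrite ya.
Qed.

Lemma uniq_node l x r : uniq (labels (Node l x r)) ->
  [/\ uniq (labels l ++ labels r), x \notin labels l & x \notin labels r].
Proof.
rewrite /= cat_uniq /= => /and4P[ul hx hxr ur].
move: hx; rewrite negb_or => /andP[hxl hr].
split=> //; by rewrite cat_uniq ul ur hr.
Qed.

Lemma condI (a b : seq nat) : uniq (a ++ b) -> all (fun y => 0 < y) (a ++ b) -> a ++ b != [::] ->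
  (seqmax (a ++ b) \in b) = (foldr maxn 0 a < foldr maxn 0 b).
Proof.
move=> hu hp hne; rewrite /seqmax foldr_maxn_cat.
case: (altP (b =P [::])) => [Eb|nb].
  by rewrite Eb /= maxn0 ltn0 in_nil.
have [mb1 mb2] := foldr_maxn_spec nb.
case: (altP (a =P [::])) => [Ea|na].
  rewrite Ea /= max0n mb1; apply/esym.
  by apply: (allP hp); rewrite Ea.
have [ma1 ma2] := foldr_maxn_spec na.
case: (ltnP (foldr maxn 0 a) (foldr maxn 0 b)) => h.
  by rewrite mb1.
apply/negP => hb.
exact: (disj hu ma1 hb).
Qed.

Definition mlab (s : seq nat) : option nat := if s is [::] then None else Some (seqmin s).

Lemma minlabE t : minlab t = mlab (labels t).
Proof.
rewrite /minlab /mlab; case: (labels t) => [|a s] //=; congr Some.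
rewrite /seqmin /=.
have [_ [h _]] := foldr_minn_spec a s.
by rewrite (minn_idPr h).
Qed.

Lemma mlab_nz (s : seq nat) : s != [::] -> mlab s = Some (seqmin s).
Proof. by case: s. Qed.

Lemma condII (a b : seq nat) : uniq (a ++ b) ->
  (seqmin (a ++ b) \in b) = lt_oinf (mlab b) (mlab a).
Proof.
move=> hu.
case: (altP (b =P [::])) => [Eb|nb].
  by rewrite Eb in_nil /=; case: (mlab a).
have [sb1 sb2] := seqmin_spec nb.
case: (altP (a =P [::])) => [Ea|na].
  by rewrite Ea /= sb1 mlab_nz.
have [sa1 sa2] := seqmin_spec na.
have nab : a ++ b != [::] by rewrite -size_eq0 size_cat addn_eq0 size_eq0 negb_and na.
have [m1 m2] := seqmin_spec nab.
rewrite !mlab_nz //.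
rewrite /=.
set m := seqmin (a ++ b) in m1 m2 *.
case: (boolP (m \in b)) => hb.
- have e : m = seqmin b by apply/eqP; rewrite eqn_leq m2 ?mem_cat ?sb1 ?orbT // sb2.
  have le : m <= seqmin a by apply: m2; rewrite mem_cat sa1.
  symmetry; rewrite ltn_neqAle -e le andbT.
  apply/eqP => E; apply: (disj hu sa1); by rewrite -E.
- have ha : m \in a by move: m1; rewrite mem_cat (negbTE hb) orbF.
  have e : m = seqmin a by apply/eqP; rewrite eqn_leq m2 ?mem_cat ?sa1 // sa2.
  have le : m <= seqmin b by apply: m2; rewrite mem_cat sb1 orbT.
  by symmetry; apply/negbTE; rewrite -leqNgt -e.
Qed.

Lemma node_split l x r : increasing (Node l x r) ->
  let s := labels l ++ x :: labels r in
  [/\ seqmin s = x, take (index (seqmin s) s) s = labels l &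
      drop (index (seqmin s) s).+1 s = labels r].
Proof.
move=> /and3P[hall _ _] s.
have hm : seqmin s = x.
  apply: seqmin_eq; first by rewrite /s /= mem_cat inE eqxx orbT.
  move=> y; rewrite /s /= mem_cat inE => /orP[hy|/orP[/eqP->//|hy]];
    apply: ltnW; apply: (allP hall); rewrite mem_cat hy ?orbT //.
have hxl : x \notin labels l.
  apply/negP => hx; have := allP hall x; rewrite mem_cat hx => /(_ isT).
  by rewrite ltnn.
have hi : index x s = size (labels l) by rewrite /s /= index_cat (negbTE hxl) /= eqxx addn0.
rewrite hm hi; split=> //; rewrite /s /=; first by rewrite take_size_cat.
by elim: (labels l) => [|? ? /= ->]; rewrite /= ?drop0.
Qed.

Lemma labels_nil_leaf t : size (labels t) = 0 -> t = Leaf.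
Proof. by case: t => //= l x r; rewrite size_cat /= addnS. Qed.

Lemma ar_le1 a b k : a + b.+1 <= k.+1 -> a <= k /\ b <= k.
Proof. lia. Qed.
Lemma ar_s0 a b : (a + b.+1 <= 1) = true -> a = 0 /\ b = 0.
Proof. lia. Qed.
Lemma ar_s1 a b : (a + b.+1 <= 1) = false -> (a == 0) && (b == 0) = false.
Proof. lia. Qed.
Lemma ar_s2 a b : (a + b.+1 <= 1) = false -> a + b == 0 = false.
Proof. lia. Qed.

Lemma andreI_tree k t : size (labels t) <= k -> increasing t -> uniq (labels t) ->
  all (fun y => 0 < y) (labels t) -> andreI_aux k (labels t) = andreIT t.
Proof.
elim: k t => [|k IH] [|l x r] //=; first by rewrite size_cat /= addnS.
move=> hs hinc hu hp.
have [e1 e2 e3] := node_split hinc.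
have [hu' _ _] := uniq_node hu.
move: hinc => /and3P[_ hl hr].
rewrite e2 e3.
have hul : uniq (labels l) by move: hu'; rewrite cat_uniq => /andP[].
have hur : uniq (labels r) by move: hu'; rewrite cat_uniq => /and3P[].
have hpl : all (fun y => 0 < y) (labels l) by move: hp; rewrite all_cat => /andP[].
have hpr : all (fun y => 0 < y) (labels r) by move: hp; rewrite all_cat /= => /and3P[].
case: ifP => hsz.
  have [-> ->] : l = Leaf /\ r = Leaf.
    by move: hsz; rewrite size_cat /= => /ar_s0 [h1 h2]; split; apply: labels_nil_leaf.
  by [].
have hnb : is_leaf l && is_leaf r = false.
  rewrite -!labels_nil -!size_eq0.
  by move: hsz; rewrite size_cat /= => /ar_s1.
have [hsl hsr] : size (labels l) <= k /\ size (labels r) <= k.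
  by apply: ar_le1; move: hs; rewrite size_cat.
rewrite hnb IH; [|done|done|done|done].
rewrite IH; [|done|done|done|done].
rewrite condI //; last first.
- by rewrite -size_eq0 size_cat; move: hsz; rewrite size_cat /= => /ar_s2 ->.
- by move: hp; rewrite !all_cat /= => /and3P[-> _ ->].
by rewrite /maxlab; case: (_ < _); case: (andreIT l); case: (andreIT r).
Qed.

Lemma andreII_tree k t : size (labels t) <= k -> increasing t -> uniq (labels t) ->
  andreII_aux k (labels t) = andreIIT t.
Proof.
elim: k t => [|k IH] [|l x r] //=; first by rewrite size_cat /= addnS.
move=> hs hinc hu.
have [e1 e2 e3] := node_split hinc.
have [hu' _ _] := uniq_node hu.
move: hinc => /and3P[_ hl hr].
rewrite e2 e3.
have hul : uniq (labels l) by move: hu'; rewrite cat_uniq => /andP[].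
have hur : uniq (labels r) by move: hu'; rewrite cat_uniq => /and3P[].
case: ifP => hsz.
  have [-> ->] : l = Leaf /\ r = Leaf.
    by move: hsz; rewrite size_cat /= => /ar_s0 [h1 h2]; split; apply: labels_nil_leaf.
  by [].
have hnb : is_leaf l && is_leaf r = false.
  rewrite -!labels_nil -!size_eq0.
  by move: hsz; rewrite size_cat /= => /ar_s1.
have [hsl hsr] : size (labels l) <= k /\ size (labels r) <= k.
  by apply: ar_le1; move: hs; rewrite size_cat.
rewrite hnb IH; [|done|done|done].
rewrite IH; [|done|done|done].
rewrite condII // !minlabE.
by case: (lt_oinf _ _); case: (andreIIT l); case: (andreIIT r).
Qed.

Fixpoint dd (s : seq nat) : nat :=
  match s with
  | x :: ((y :: _) as s') => (y < x) + dd s'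
  | _ => 0
  end.

Lemma dd_sum p : dd p = \sum_(0 <= i < (size p).-1) (nth 0 p i.+1 < nth 0 p i).
Proof.
elim: p => [|x [|y r] IH]; [by rewrite big_geq | by rewrite big_geq |].
rewrite [size _]/= big_nat_recl //.
have -> : dd [:: x, y & r] = (y < x) + dd (y :: r) by [].
rewrite IH.
by [].
Qed.

Lemma des_dd s : des s = dd (0 :: s ++ [:: 0]).
Proof. by rewrite dd_sum /des /= size_cat /= addn1. Qed.

Lemma dd_cat a x b : dd (a ++ x :: b) = dd (a ++ [:: x]) + dd (x :: b).
Proof.
elim: a => [|z a IH] //.
case: a IH => [|w a] IH.
  by rewrite /= addn0.
have -> : dd ((z :: w :: a) ++ x :: b) = (w < z) + dd ((w :: a) ++ x :: b) by [].
have -> : dd ((z :: w :: a) ++ [:: x]) = (w < z) + dd ((w :: a) ++ [:: x]) by [].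
by rewrite IH addnA.
Qed.

Lemma dd_last a x y : all (fun z => x < z) a -> all (fun z => y < z) a ->
  dd (a ++ [:: x]) = dd (a ++ [:: y]).
Proof.
elim: a => [|z a IH] //=.
move=> /andP[hx ha] /andP[hy hb].
case: a IH ha hb => [|w a] IH ha hb /=; first by rewrite hx hy.
by move: IH => /= ->.
Qed.

Fixpoint noLO (t : btree) : bool :=
  match t with
  | Leaf => true
  | Node l _ r => [&& is_leaf r ==> is_leaf l, noLO l & noLO r]
  end.

Lemma andreIT_noLO t : andreIT t -> noLO t.
Proof.
elim: t => [|l IHl x r IHr] //= /and3P[h hl hr].
rewrite IHl // IHr // !andbT.
by case: r h {IHr hr} => //=; case: l {IHl hl}; rewrite //= ltn0.
Qed.

Lemma andreIIT_noLO t : andreIIT t -> noLO t.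
Proof.
elim: t => [|l IHl x r IHr] //= /and3P[h hl hr].
rewrite IHl // IHr // !andbT.
by case: r h {IHr hr} => //=; case: l {IHl hl}; rewrite //= /minlab /=; case: (labels _).
Qed.

Lemma leaves_dd t : increasing t -> all (fun y => 0 < y) (labels t) -> noLO t ->
  leaves t = dd (labels t ++ [:: 0]).
Proof.
elim: t => [|l IHl x r IHr] //= /and3P[hall hl hr] hp /and3P[hlo nl nr].
rewrite -catA cat_cons dd_cat.
have hpl : all (fun y => 0 < y) (labels l) by move: hp; rewrite all_cat => /andP[].
have hpr : all (fun y => 0 < y) (labels r) by move: hp; rewrite all_cat /= => /and3P[].
have hx : 0 < x by move: hp; rewrite all_cat /= => /and3P[].
have hal : all (fun z => x < z) (labels l) by move: hall; rewrite all_cat => /andP[].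
have har : all (fun z => x < z) (labels r) by move: hall; rewrite all_cat => /andP[].
rewrite (@dd_last _ x 0) // -IHl //.
case: r IHr hr hpr nr har hlo {hall hp} => [|rl rx rr] IHr hr hpr nr har hlo.
  by case: l IHl hl hpl nl hlo {hal} => //= _ _ _ _ _; rewrite hx.
rewrite [labels _]/= in har hpr *.
case E: (labels rl ++ rx :: labels rr) => [|y s]; first by case: (labels rl) E.
have hxy : x < y by move: har; rewrite E => /andP[].
have -> : dd (x :: (y :: s) ++ [:: 0]) = dd ((y :: s) ++ [:: 0]).
  by rewrite /= ltnNge (ltnW hxy).
rewrite -E -[labels rl ++ _]/(labels (Node rl rx rr)) -IHr //.
by case: l {IHl hl hpl nl hlo hal}.
Qed.

Lemma leaves_des t : increasing t -> all (fun y => 0 < y) (labels t) -> noLO t ->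
  leaves t = des (labels t).
Proof.
move=> h1 h2 h3; rewrite des_dd leaves_dd //.
by case: (labels t).
Qed.

Definition tpred (M : seq (option nat)) (j : nat) (v : btree) : bool :=
  match v with
  | Leaf => false
  | Node l x r => (Defs.root l \in M) && ((j \in labels r) || (j == x))
  end.

Lemma tipE t i j : tree_inv_pair t i j =
  (j < i) && has (tpred (map Defs.root (path_to t i)) j) (path_to t i).
Proof. by []. Qed.

Lemma eq_has_all (T : Type) (Q a b : pred T) s :
  all Q s -> (forall v, Q v -> a v = b v) -> has a s = has b s.
Proof. elim: s => [|v s IH] //= /andP[qv qs] h; by rewrite h // IH. Qed.

Definition subl (t v : btree) : bool := all (fun y => y \in labels t) (labels v) && ~~ is_leaf v.

Lemma path_all t i : all (subl t) (path_to t i).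
Proof.
elim: t => [|l IHl x r IHr] //=.
have hself : subl (Node l x r) (Node l x r) by rewrite /subl andbT; apply/allP.
case: ifP => _; first by rewrite /= hself.
case: ifP => _.
  rewrite /= hself /=; apply: sub_all IHl => v /andP[/allP h hv]; rewrite /subl hv andbT.
  by apply/allP => y /h hy; rewrite mem_cat hy.
case: ifP => _ //.
rewrite /= hself /=; apply: sub_all IHr => v /andP[/allP h hv]; rewrite /subl hv andbT.
by apply/allP => y /h hy; rewrite mem_cat inE hy !orbT.
Qed.

Lemma path_head t i : i \in labels t -> exists P, path_to t i = t :: P.
Proof.
case: t => [|l x r] //= hi.
case: ifP => hxi; first by exists [::].
case: ifP => hl; first by eexists.
move: hi; rewrite mem_cat inE hl /= => /orP[/eqP E|->]; last by eexists.
by subst; rewrite eqxx in hxi.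
Qed.

Lemma tpred_cons x M j v : x \notin labels v -> tpred (Some x :: M) j v = tpred M j v.
Proof.
case: v => [|vl vx vr] //= hx.
rewrite inE; case: vl hx => [|a y b] //= hx.
case: (altP (Some y =P Some x)) => [[E]|] //=; subst.
by move: hx; rewrite !mem_cat !inE eqxx /= orbT.
Qed.

Lemma tpred_out M j v : j \notin labels v -> tpred M j v = false.
Proof.
case: v => [|vl vx vr] //=; rewrite mem_cat inE negb_or negb_or => /and3P[_ h1 h2].
by rewrite (negbTE h1) (negbTE h2) andbF.
Qed.

Lemma subl_notin t v x : x \notin labels t -> subl t v -> x \notin labels v.
Proof. move=> hx /andP[/allP h _]; apply/negP => /h; by rewrite (negbTE hx). Qed.

Lemma tip_out t i j : j \notin labels t -> tree_inv_pair t i j = false.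
Proof.
move=> hj; rewrite tipE.
rewrite (@eq_has_all _ (subl t) _ pred0) ?has_pred0 ?andbF //; first exact: path_all.
by move=> v hv; apply: tpred_out; apply: subl_notin hv.
Qed.

Lemma tipL_gen l x r i j : i \in labels l -> x \notin labels l ->
  tree_inv_pair (Node l x r) i j =
  (j < i) && (((j \in labels r) || (j == x)) ||
              has (tpred (map Defs.root (path_to l i)) j) (path_to l i)).
Proof.
move=> hi hx; rewrite tipE /=.
have -> : (x == i) = false by apply/negbTE; apply/eqP => E; subst; rewrite hi in hx.
rewrite hi.
have [P hP] := path_head hi.
rewrite hP /= !inE eqxx orbT /=.
congr (_ && (_ || _)).
change (has (tpred (Some x :: map Defs.root (l :: P)) j) (l :: P) =
        has (tpred (map Defs.root (l :: P)) j) (l :: P)); rewrite -hP.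
apply: (@eq_has_all _ (subl l)); first by exact: path_all.
by move=> v hv; apply: tpred_cons; apply: subl_notin hv.
Qed.

Lemma notin_map_root (P : seq btree) o : all (fun v => Defs.root v != o) P -> o \notin map Defs.root P.
Proof. by elim: P => [|v P IH] //= /andP[h1 h2]; rewrite inE negb_or eq_sym h1 IH. Qed.

Lemma tipR_gen l x r i j : i \in labels r -> x \notin labels r ->
  i \notin labels l -> x != i -> uniq (labels l ++ labels r) -> x \notin labels l ->
  tree_inv_pair (Node l x r) i j = tree_inv_pair r i j.
Proof.
move=> hi hx hil hxi hu hxl; rewrite !tipE /=.
rewrite (negbTE hxi) (negbTE hil) hi /=.
have hroot : (Defs.root l \in Some x :: map Defs.root (path_to r i)) = false.
  apply/negbTE; rewrite inE negb_or; apply/andP; split.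
    case: l hil hu hxl => [|a y b] //= _ hu hxl; apply/eqP => -[E]; subst y.
    by move: hxl; rewrite mem_cat inE eqxx orbT.
  apply: notin_map_root; apply: sub_all (path_all r i) => v /andP[/allP h].
  case: v h => [|vl vx vr] //= h _.
  case: l hu hil hxl => [|a y b] //= hu _ _; apply/eqP => -[E]; subst y.
  apply: (disj hu (y:=vx)); first by rewrite mem_cat inE eqxx orbT.
  by apply: h; rewrite mem_cat inE eqxx orbT.
rewrite hroot /=.
congr (_ && _).
apply: (@eq_has_all _ (subl r)); first exact: path_all.
by move=> v hv; apply: tpred_cons; apply: subl_notin hv.
Qed.

Fixpoint invw (s : seq nat) : nat :=
  if s is a :: s' then \sum_(y <- s') (y < a) + invw s' else 0.

Lemma inv_word_invw s : inv_word s = invw s.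
Proof.
rewrite /inv_word; elim: s => [|a s IH]; first by rewrite big_geq.
rewrite [size _]/= big_nat_recl // big_add1 /= -IH.
congr (_ + _).
  by rewrite [in RHS](big_nth 0).
apply: eq_bigr => i _; by rewrite big_add1.
Qed.

Lemma invw_cat a c : invw (a ++ c) = invw a + invw c + \sum_(i <- a) \sum_(j <- c) (j < i).
Proof.
elim: a => [|z a IH] /=; first by rewrite big_nil addn0.
rewrite big_cat /= IH big_cons; lia.
Qed.

Lemma inv_tree_word t : increasing t -> uniq (labels t) -> inv_tree t = invw (labels t).
Proof.
elim: t => [|l IHl x r IHr] hinc hu; first by rewrite /inv_tree big_nil.
have [hu' hxl hxr] := uniq_node hu.
move: (hinc) => /and3P[hall hl hr].
have hul : uniq (labels l) by move: hu'; rewrite cat_uniq => /andP[].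
have hur : uniq (labels r) by move: hu'; rewrite cat_uniq => /and3P[].
have gtL : forall y, y \in labels l -> x < y.
  by move=> y hy; apply: (allP hall); rewrite mem_cat hy.
have gtR : forall y, y \in labels r -> x < y.
  by move=> y hy; apply: (allP hall); rewrite mem_cat hy orbT.
rewrite [labels _]/= invw_cat /= -IHl // -IHr //.
have -> : \sum_(y <- labels r) (y < x) = 0.
  by apply: big1_seq => y /andP[_ hy]; rewrite ltnNge ltnW // gtR.
rewrite add0n.
have -> : \sum_(i <- labels l) \sum_(j <- x :: labels r) (j < i) =
          size (labels l) + \sum_(i <- labels l) \sum_(j <- labels r) (j < i).
  rewrite -sum1_size -big_split /=; apply: eq_big_seq => i hi.
  by rewrite big_cons gtL.
rewrite /inv_tree [labels (Node l x r)]/= big_cat big_cons /=.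
have -> : \sum_(j <- labels l ++ x :: labels r) tree_inv_pair (Node l x r) x j = 0.
  apply: big1_seq => j /andP[_ hj]; rewrite tipE.
  have : x <= j by move: hj; rewrite mem_cat inE => /orP[/gtL/ltnW|/orP[/eqP->//|/gtR/ltnW]].
  by rewrite leqNgt => /negbTE ->.
have -> : \sum_(i <- labels r) \sum_(j <- labels l ++ x :: labels r) tree_inv_pair (Node l x r) i j
        = \sum_(i <- labels r) \sum_(j <- labels r) tree_inv_pair r i j.
  apply: eq_big_seq => i hi.
  have hil : i \notin labels l by apply/negP => h; apply: (disj hu' h hi).
  have hxi : x != i by apply/eqP => E; subst; rewrite hi in hxr.
  under eq_big_seq => j _ do rewrite tipR_gen //.
  rewrite big_cat big_cons /= tip_out // big1_seq ?add0n //.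
  move=> j /andP[_ hj]; rewrite tip_out //; apply/negP => h; exact: (disj hu' hj h).
have -> : \sum_(i <- labels l) \sum_(j <- labels l ++ x :: labels r) tree_inv_pair (Node l x r) i j
        = \sum_(i <- labels l) (\sum_(j <- labels l) tree_inv_pair l i j +
                                (1 + \sum_(j <- labels r) (j < i))).
  apply: eq_big_seq => i hi.
  rewrite big_cat big_cons /=; congr (_ + (_ + _)).
  - apply: eq_big_seq => j hj; rewrite tipL_gen // tipE.
    have hjr : j \notin labels r by apply/negP => h; exact: (disj hu' hj h).
    have hjx : (j == x) = false by apply/negbTE/eqP => E; subst; rewrite hj in hxl.
    by rewrite (negbTE hjr) hjx.
  - by rewrite tipL_gen // eqxx orbT gtL.
  - apply: eq_big_seq => j hj; by rewrite tipL_gen // hj /= andbT.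
rewrite !big_split /= sum1_size; lia.
Qed.

Lemma perm_facts n s : perm_eq s (iota 1 n) -> uniq s /\ all (fun y => 0 < y) s.
Proof.
move=> hp; split; first by rewrite (perm_uniq hp) iota_uniq.
apply/allP => y; rewrite (perm_mem hp) mem_iota; by case/andP.
Qed.

Lemma andreIT_Psi pi : uniq pi -> all (fun y => 0 < y) pi -> andreIT (Psi pi) = andreI pi.
Proof.
move=> hu hp; have := @andreI_tree (size pi) (Psi pi); rewrite labels_Psi => <- //.
exact: increasing_Psi.
Qed.

Lemma andreIIT_Psi pi : uniq pi -> andreIIT (Psi pi) = andreII pi.
Proof.
move=> hu; have := @andreII_tree (size pi) (Psi pi); rewrite labels_Psi => <- //.
exact: increasing_Psi.
Qed.

Theorem proposition6p4 (n : nat) :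
  (* Psi : And^I_n -> T^I_n is a bijection *)
  ((forall pi, AndI n pi -> AndreITree n (Psi pi)) /\
   (forall pi1 pi2, AndI n pi1 -> AndI n pi2 -> Psi pi1 = Psi pi2 -> pi1 = pi2) /\
   (forall T, AndreITree n T -> exists2 pi, AndI n pi & Psi pi = T)) /\
  (* Psi : And^II_n -> T^II_n is a bijection *)
  ((forall pi, AndII n pi -> AndreIITree n (Psi pi)) /\
   (forall pi1 pi2, AndII n pi1 -> AndII n pi2 -> Psi pi1 = Psi pi2 -> pi1 = pi2) /\
   (forall T, AndreIITree n T -> exists2 pi, AndII n pi & Psi pi = T)) /\
  (* statistics *)
  (forall pi, AndI n pi \/ AndII n pi ->
     leaves (Psi pi) = des pi /\ inv_tree (Psi pi) = inv_word pi).
Proof.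
have inj : forall pi1 pi2, Psi pi1 = Psi pi2 -> pi1 = pi2.
  by move=> p1 p2 E; rewrite -(labels_Psi p1) E labels_Psi.
split; [split; [|split] | split; [split; [|split] |]].
- move=> pi /andP[hp ha]; have [hu hpos] := perm_facts hp.
  by rewrite /AndreITree /inc_tree_on labels_Psi (hp : perm_eq pi (iota 1 n)) increasing_Psi // andreIT_Psi.
- by move=> p1 p2 _ _; apply: inj.
- move=> T /andP[/andP[hp hinc] ha]; have [hu hpos] := perm_facts hp.
  exists (labels T); last exact: Psi_labels.
  by rewrite /AndI /is_perm_word hp /andreI andreI_tree.
- move=> pi /andP[hp ha]; have [hu hpos] := perm_facts hp.
  by rewrite /AndreIITree /inc_tree_on labels_Psi (hp : perm_eq pi (iota 1 n)) increasing_Psi // andreIIT_Psi.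
- by move=> p1 p2 _ _; apply: inj.
- move=> T /andP[/andP[hp hinc] ha]; have [hu hpos] := perm_facts hp.
  exists (labels T); last exact: Psi_labels.
  by rewrite /AndII /is_perm_word hp /andreII andreII_tree.
- move=> pi H.
  have hp : perm_eq pi (iota 1 n) by case: H => /andP[].
  have [hu hpos] := perm_facts hp.
  have hnl : noLO (Psi pi).
    case: H => /andP[_ h].
    + by apply: andreIT_noLO; rewrite andreIT_Psi.
    + by apply: andreIIT_noLO; rewrite andreIIT_Psi.
  have hinc := increasing_Psi hu.
  rewrite leaves_des ?labels_Psi // inv_tree_word ?labels_Psi //.
  by rewrite inv_word_invw.
Qed.
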